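(* Let $R_0^*\in SO(3)$ with unit quaternion representation $w_0^*\in\mathbb{S}^3$, let $1\le k^*<\ell$, let $(y_i,x_i)$ satisfy $y_i=R_0^*x_i$ for $i=1,\dots,k^*$, and let $c_1^2,\dots,c_\ell^2\ge 0$ with $\sum_{i=1}^{k^*}c_i^2>0$. Suppose the outliers are clustered: there is $w_0^{\mathrm{cl}}\in\mathbb{S}^3$ with $w_0^{\mathrm{cl}}\ne\pm w_0^*$ such that $Q_{k^*+1}w_0^{\mathrm{cl}}=\cdots=Q_\ell w_0^{\mathrm{cl}}=0$. Let $\omega^*=[w_0^*;\dots;w_0^*;0;\dots;0]\in\mathbb{R}^{4(\ell+1)}$ with $w_0^*$ appearing $k^*+1$ times, and $\mathcal{W}^*=\omega^*(\omega^* )^\top$. If $$1-\frac{\sum_{j=k^*+1}^{\ell}c_j^2}{2\sum_{i=1}^{k^*}c_i^2}<\big|(w_0^{\mathrm{cl}})^\top w_0^*\big|,$$ then $\mathcal{W}^*$ does not globally minimize (SDR).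
   Context: For $w=[w_1;w_2;w_3;w_4]\in\mathbb{S}^3$, $R(w)=\begin{bmatrix} w_1^2+w_2^2-w_3^2-w_4^2 & 2(w_2w_3-w_1w_4) & 2(w_2w_4+w_1w_3)\\ 2(w_2w_3+w_1w_4) & w_1^2+w_3^2-w_2^2-w_4^2 & 2(w_3w_4-w_1w_2)\\ 2(w_2w_4-w_1w_3) & 2(w_3w_4+w_1w_2) & w_1^2+w_4^2-w_2^2-w_3^2\end{bmatrix}\in SO(3)$; $\pm w$ are the unit quaternion representations of $R(w)$. $Q_i$ is the unique symmetric $4\times4$ matrix with $w^\top Q_iw=\|y_i-R(w)x_i\|_2^2$ for all $w\in\mathbb{S}^3$. For $\mathcal{A}\in\mathbb{R}^{4(\ell+1)\times4(\ell+1)}$, $[\mathcal{A}]_{ij}$ ($0\le i,j\le\ell$) is the $4\times4$ block in rows $4i+1..4i+4$, columns $4j+1..4j+4$. $\mathcal{Q}$ is symmetric with $[\mathcal{Q}]_{0i}=[\mathcal{Q}]_{i0}=\frac12(Q_i-c_i^2I_4)$ ($i\ge1$), other blocks zero. (SDR): minimize $\operatorname{tr}(\mathcal{Q}\mathcal{W})+\sum_ic_i^2$ over symmetric $\mathcal{W}\succeq0$ s.t. $[\mathcal{W}]_{0i}=[\mathcal{W}]_{ii}$ ($i=1..\ell$), $\operatorname{tr}([\mathcal{W}]_{00})=1$. *)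

(* Defs.v *)
From HB Require Import structures.
From mathcomp Require Import all_boot all_order all_algebra.
From mathcomp Require Import zify.
From mathcomp Require Import reals.
Set Implicit Arguments. Unset Strict Implicit. Unset Printing Implicit Defensive.
Import Order.TTheory GRing.Theory Num.Theory.
Local Open Scope ring_scope.

Section Defs.
Variable R : realType.

Definition dotv n (u v : 'cV[R]_n) : R := (u^T *m v) 0 0.
Definition sqnorm n (u : 'cV[R]_n) : R := dotv u u.

Definition on_sphere3 (w : 'cV[R]_4) : Prop := sqnorm w = 1.

Definition quat_rot (w : 'cV[R]_4) : 'M[R]_3 :=
  let w1 := w 0 0 in let w2 := w 1 0 in let w3 := w 2 0 in let w4 := w 3 0 in
  \matrix_(i < 3, j < 3)
   match nat_of_ord i, nat_of_ord j with
   | 0, 0 => w1^+2 + w2^+2 - w3^+2 - w4^+2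
   | 0, 1 => 2 * (w2 * w3 - w1 * w4)
   | 0, _ => 2 * (w2 * w4 + w1 * w3)
   | 1, 0 => 2 * (w2 * w3 + w1 * w4)
   | 1, 1 => w1^+2 + w3^+2 - w2^+2 - w4^+2
   | 1, _ => 2 * (w3 * w4 - w1 * w2)
   | _, 0 => 2 * (w2 * w4 - w1 * w3)
   | _, 1 => 2 * (w3 * w4 + w1 * w2)
   | _, _ => w1^+2 + w4^+2 - w2^+2 - w3^+2
   end.

(* Q is "the" symmetric 4x4 matrix with w^T Q w = ||y - R(w) x||^2 on S^3
   (such a matrix exists and is unique). *)
Definition is_Qmat (Q : 'M[R]_4) (y x : 'cV[R]_3) : Prop :=
  Q^T = Q /\
  forall w : 'cV[R]_4, on_sphere3 w -> (w^T *m Q *m w) 0 0 = sqnorm (y - quat_rot w *m x).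

Definition psd n (A : 'M[R]_n) : Prop :=
  A^T = A /\ forall v : 'cV[R]_n, 0 <= (v^T *m A *m v) 0 0.

Lemma blk_idx_lt (l : nat) (i : 'I_l.+1) (a : 'I_4) : (4 * i + a < 4 * l.+1)%N.
Proof. have := ltn_ord i; have := ltn_ord a; lia. Qed.

Definition blk_idx (l : nat) (i : 'I_l.+1) (a : 'I_4) : 'I_(4 * l.+1) :=
  Ordinal (blk_idx_lt i a).

Definition blk (l : nat) (A : 'M[R]_(4 * l.+1)) (i j : 'I_l.+1) : 'M[R]_4 :=
  \matrix_(a < 4, b < 4) A (blk_idx i a) (blk_idx j b).

(* the matrix \mathcal{Q}: blocks [Q]_{0i} = [Q]_{i0} = (Q_i - c_i^2 I)/2, i >= 1,
   all other blocks 0.  Data Q, c2 are indexed by i = 1..l. *)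
Definition calQ (l : nat) (Q : nat -> 'M[R]_4) (c2 : nat -> R) : 'M[R]_(4 * l.+1) :=
  \matrix_(p, q)
    let i := (p %/ 4)%N in let j := (q %/ 4)%N in
    let a : 'I_4 := inord (p %% 4) in let b : 'I_4 := inord (q %% 4) in
    if (i == 0%N) && (j != 0%N) then ((2%:R)^-1 *: (Q j - c2 j *: 1%:M)) a b
    else if (j == 0%N) && (i != 0%N) then ((2%:R)^-1 *: (Q i - c2 i *: 1%:M)) a b
    else 0.

Definition sdr_feasible (l : nat) (W : 'M[R]_(4 * l.+1)) : Prop :=
  psd W /\
  (forall i : 'I_l.+1, i != ord0 -> blk W ord0 i = blk W i i) /\
  \tr (blk W ord0 ord0) = 1.

Definition sdr_obj (l : nat) (Q : nat -> 'M[R]_4) (c2 : nat -> R)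
    (W : 'M[R]_(4 * l.+1)) : R :=
  \tr (calQ l Q c2 *m W) + \sum_(1 <= i < l.+1) c2 i.

Definition sdr_global_min (l : nat) (Q : nat -> 'M[R]_4) (c2 : nat -> R)
    (W : 'M[R]_(4 * l.+1)) : Prop :=
  sdr_feasible W /\
  forall W' : 'M[R]_(4 * l.+1), sdr_feasible W' -> sdr_obj Q c2 W <= sdr_obj Q c2 W'.

Definition omega_star (l k : nat) (w0 : 'cV[R]_4) : 'cV[R]_(4 * l.+1) :=
  \col_p (if ((p %/ 4) <= k)%N then w0 (inord (p %% 4)) 0 else 0).

End Defs.

(* Main.v *)
Require Import Defs.
From HB Require Import structures.
From mathcomp Require Import all_boot all_order all_algebra.
From mathcomp Require Import reals.
From mathcomp Require Import ring lra.
Import Order.TTheory GRing.Theory Num.Theory.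
Local Open Scope ring_scope.

Section S.
Variable R : realType.

Definition mk (l : nat) (f : nat -> 'cV[R]_4) : 'cV[R]_(4 * l.+1) :=
  \col_p f (p %/ 4)%N (inord (p %% 4)) 0.

Definition bf (p : 'cV[R]_4) (M : 'M[R]_4) (q : 'cV[R]_4) : R := (p^T *m M *m q) 0 0.

Lemma bfE p M q : bf p M q = \sum_a \sum_b p a 0 * M a b * q b 0.
Proof.
rewrite /bf mxE; under eq_bigr => b _ do rewrite mxE big_distrl /=.
rewrite exchange_big /=; apply: eq_bigr => a _; apply: eq_bigr => b _.
by rewrite !mxE.
Qed.

Lemma blk_val (l : nat) (i : 'I_l.+1) (a : 'I_4) :
  ((blk_idx i a) %/ 4 = i)%N /\ (inord ((blk_idx i a) %% 4) = a :> 'I_4).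
Proof.
rewrite /= mulnC divnMDl // divn_small // addn0; split => //.
by rewrite modnMDl modn_small // inord_val.
Qed.

Lemma sum_blocks (n : nat) (F : 'I_(4 * n.+1) -> R) :
  \sum_p F p = \sum_(i < n.+1) \sum_(a < 4) F (blk_idx i a).
Proof.
pose d := blk_idx (@ord0 n) (0 : 'I_4).
pose F' (m : nat) := F (insubd d m).
have HF : forall p, F p = F' p by move=> p; rewrite /F' valKd.
have HG : forall i a, F (blk_idx i a) = F' (4 * i + a)%N.
  by move=> i a; rewrite HF.
under eq_bigr do rewrite HF.
rewrite [RHS](eq_bigr (fun i : 'I_n.+1 => \sum_(a<4) F' (4*i+a)%N)); last first.
  by move=> i _; apply: eq_bigr => a _; rewrite HG.
rewrite -(big_mkord xpredT F').
have gen : forall m, (m <= n.+1)%N ->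
  \sum_(0 <= p < 4 * m) F' p = \sum_(0 <= i < m) \sum_(a < 4) F' (4 * i + a)%N.
  elim=> [|m IH] Hm; first by rewrite muln0 !big_geq.
  rewrite [RHS]big_nat_recr // -IH; last by apply: ltnW.
  rewrite mulnS addnC (big_cat_nat _ (n:=4 * m)) //; last by rewrite leq_addr.
  congr (_ + _).
  rewrite -[X in \big[_/_]_(X <= _ < _) _]add0n big_addn addKn big_mkord.
  by apply: eq_bigr => a _; rewrite addnC.
rewrite gen // big_mkord //.
Qed.


Lemma mk_blk l (f : nat -> 'cV[R]_4) (i : 'I_l.+1) (a : 'I_4) : mk l f (blk_idx i a) 0 = f i a 0.
Proof. by rewrite mxE; case: (blk_val _ i a) => -> ->. Qed.

Definition Mq (Q : nat -> 'M[R]_4) (c2 : nat -> R) (n : nat) : 'M[R]_4 :=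
  (2%:R)^-1 *: (Q n - c2 n *: 1%:M).

Lemma calQ_blk l Q c2 (i j : 'I_l.+1) a b :
  calQ l Q c2 (blk_idx i a) (blk_idx j b) =
  if (i == 0 :> nat) && (j != 0 :> nat) then Mq Q c2 j a b
  else if (j == 0 :> nat) && (i != 0 :> nat) then Mq Q c2 i a b else 0.
Proof.
by rewrite mxE; case: (blk_val _ i a) => -> ->; case: (blk_val _ j b) => -> ->.
Qed.

Lemma quad l Q c2 f :
  ((mk l f)^T *m calQ l Q c2 *m mk l f) 0 0 =
  \sum_(1 <= i < l.+1) (bf (f 0%N) (Mq Q c2 i) (f i) + bf (f i) (Mq Q c2 i) (f 0%N)).
Proof.
rewrite mxE.
under eq_bigr => q _ do rewrite mxE big_distrl /=.
rewrite exchange_big /=.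
transitivity (\sum_(i < l.+1) \sum_(a<4) \sum_(j<l.+1) \sum_(b<4)
   f i a 0 * (if (i == 0 :> nat) && (j != 0 :> nat) then Mq Q c2 j a b
  else if (j == 0 :> nat) && (i != 0 :> nat) then Mq Q c2 i a b else 0) * f j b 0).
  rewrite sum_blocks; apply: eq_bigr => i _; apply: eq_bigr => a _.
  rewrite sum_blocks; apply: eq_bigr => j _; apply: eq_bigr => b _.
  by rewrite [_^T _ _]mxE !mk_blk calQ_blk.
rewrite big_ord_recl /= big_add1 /= big_mkord big_split /=.
congr (_ + _).
  rewrite exchange_big big_ord_recl /= big1 ?add0r; last first.
    by move=> a _; apply: big1 => b _; rewrite mulr0 mul0r.
  apply: eq_bigr => j _; rewrite bfE /bump /= add1n.
  by apply: eq_bigr => a _; apply: eq_bigr => b _.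
apply: eq_bigr => i _; rewrite /bump /= add1n bfE.
apply: eq_bigr => a _; rewrite big_ord_recl /= [X in _ + X]big1 ?addr0; last first.
  by move=> j _; apply: big1 => b _; rewrite mulr0 mul0r.
by apply: eq_bigr => b _.
Qed.

Lemma tr_rank1 n (A : 'M[R]_n) (w : 'cV[R]_n) :
  \tr (A *m (w *m w^T)) = (w^T *m A *m w) 0 0.
Proof. by rewrite mulmxA mxtrace_mulC mulmxA trace_mx11. Qed.

Lemma quad_rank1 n (v w : 'cV[R]_n) :
  (v^T *m (w *m w^T) *m v) 0 0 = ((w^T *m v) 0 0) ^+ 2.
Proof.
rewrite mulmxA -mulmxA mxE big_ord1 expr2; congr (_ * _).
by rewrite -[v^T *m w]trmxK trmx_mul trmxK mxE.
Qed.

Lemma blk_rank1 l (f : nat -> 'cV[R]_4) (i j : 'I_l.+1) :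
  blk (mk l f *m (mk l f)^T) i j = f i *m (f j)^T.
Proof.
apply/matrixP => a b; rewrite !mxE !big_ord1 !mxE.
by case: (blk_val _ i a) => -> ->; case: (blk_val _ j b) => -> ->.
Qed.

Lemma blkD l (A B : 'M[R]_(4 * l.+1)) i j : blk (A + B) i j = blk A i j + blk B i j.
Proof. by apply/matrixP => a b; rewrite !mxE. Qed.

Lemma blkZ l (s : R) (A : 'M[R]_(4 * l.+1)) i j : blk (s *: A) i j = s *: blk A i j.
Proof. by apply/matrixP => a b; rewrite !mxE. Qed.

Lemma tr_outer (p : 'cV[R]_4) : \tr (p *m p^T) = sqnorm p.
Proof. by rewrite mxtrace_mulC trace_mx11. Qed.

Lemma dotvDl n (p q r : 'cV[R]_n) : dotv (p + q) r = dotv p r + dotv q r.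
Proof. by rewrite /dotv linearD /= mulmxDl mxE. Qed.
Lemma dotvDr n (p q r : 'cV[R]_n) : dotv r (p + q) = dotv r p + dotv r q.
Proof. by rewrite /dotv mulmxDr mxE. Qed.
Lemma dotvZl n s (p q : 'cV[R]_n) : dotv (s *: p) q = s * dotv p q.
Proof. by rewrite /dotv linearZ /= -scalemxAl mxE. Qed.
Lemma dotvZr n s (p q : 'cV[R]_n) : dotv p (s *: q) = s * dotv p q.
Proof. by rewrite /dotv -scalemxAr mxE. Qed.
Lemma dotvC n (p q : 'cV[R]_n) : dotv p q = dotv q p.
Proof. by rewrite /dotv -[p^T *m q]trmxK trmx_mul trmxK mxE. Qed.
Lemma sqnorm_ge0 n (p : 'cV[R]_n) : 0 <= sqnorm p.
Proof. by rewrite /sqnorm /dotv mxE; apply: sumr_ge0 => i _; rewrite mxE -expr2 sqr_ge0. Qed.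

Lemma bfZM p s A q : bf p (s *: A) q = s * bf p A q.
Proof. by rewrite /bf -scalemxAr -scalemxAl mxE. Qed.
Lemma bfBM p A B q : bf p (A - B) q = bf p A q - bf p B q.
Proof. rewrite /bf mulmxBr mulmxBl. set U := _ *m q. set V := _ *m q. by rewrite !mxE. Qed.
Lemma bf1 p s q : bf p (s *: 1%:M) q = s * dotv p q.
Proof. by rewrite bfZM /bf mulmx1. Qed.
Lemma bfZl p s A q : bf (s *: p) A q = s * bf p A q.
Proof. by rewrite /bf linearZ /= -!scalemxAl mxE. Qed.
Lemma bfZr p s A q : bf p A (s *: q) = s * bf p A q.
Proof. by rewrite /bf -!scalemxAr mxE. Qed.
Lemma bf0r p A : bf p A 0 = 0.
Proof. by rewrite /bf mulmx0 mxE. Qed.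
Lemma bf0l p A : bf 0 A p = 0.
Proof. by rewrite /bf trmx0 !mul0mx mxE. Qed.
Lemma bfT p A q : bf p A q = bf q A^T p.
Proof. by rewrite /bf -[p in RHS]trmxK -trmx_mul -trmx_mul [RHS]mxE mulmxA. Qed.

Definition Tq (Q : nat -> 'M[R]_4) (c2 : nat -> R) i p q :=
  bf p (Mq Q c2 i) q + bf q (Mq Q c2 i) p.

Lemma quadT l Q c2 f :
  ((mk l f)^T *m calQ l Q c2 *m mk l f) 0 0 =
  \sum_(1 <= i < l.+1) Tq Q c2 i (f 0%N) (f i).
Proof. by rewrite quad. Qed.

Lemma Tq_out (Q : nat -> 'M[R]_4) c2 i p w s :
  (Q i)^T = Q i -> Q i *m w = 0 ->
  Tq Q c2 i p (s *: w) = - (c2 i * s * dotv p w).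
Proof.
move=> HT Hw; rewrite /Tq /Mq !bfZM !bfBM !bf1 bfZr bfZl.
have h1 : bf p (Q i) w = 0 by rewrite /bf -mulmxA Hw mulmx0 mxE.
have h2 : bf w (Q i) p = 0 by rewrite bfT HT.
rewrite h1 h2 dotvZl dotvZr (dotvC _ w p).
have h3 : (2%:R : R) != 0 by rewrite pnatr_eq0.
by field.
Qed.

Lemma Tq_in (Q : nat -> 'M[R]_4) c2 i w :
  bf w (Q i) w = 0 -> dotv w w = 1 -> Tq Q c2 i w w = - c2 i.
Proof.
move=> h1 h2; rewrite /Tq /Mq !bfZM !bfBM !bf1 h1 h2.
by field.
Qed.

Lemma Tq0 (Q : nat -> 'M[R]_4) c2 i p : Tq Q c2 i p 0 = 0.
Proof. by rewrite /Tq bf0r bf0l addr0. Qed.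

Lemma psd_comb n (w v : 'cV[R]_n) (a b : R) : 0 <= a -> 0 <= b ->
  psd (a *: (w *m w^T) + b *: (v *m v^T)).
Proof.
move=> ha hb; split.
  by rewrite linearD /= !linearZ /= !trmx_mul !trmxK.
move=> z; rewrite mulmxDr mulmxDl -!scalemxAr -!scalemxAl.
have E1 := quad_rank1 _ z w; have E2 := quad_rank1 _ z v.
set X1 := (z^T *m (w *m w^T) *m z) in E1 *.
set X2 := (z^T *m (v *m v^T) *m z) in E2 *.
clearbody X1 X2. rewrite !mxE E1 E2.
by apply: addr_ge0; apply: mulr_ge0 => //; apply: sqr_ge0.
Qed.

Lemma arith (C1 C2 c : R) : 0 < C1 -> 0 <= C2 -> c ^+ 2 <= 1 ->
  1 - C2 / (2%:R * C1) < `|c| ->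
  exists u b D : R, [/\ 0 < u, u < 1, 0 < D, b * (1 - c ^+ 2 * u) = 1 - u &
     D = b - u * c ^+ 2 * b ^+ 2 /\ (1 - u) * C1 < b * C2].
Proof.
move=> hC1 hC2 hc hcond.
have ha : c ^+ 2 = `|c| ^+ 2 by rewrite real_normK // num_real.
have a0 : 0 <= `|c| by [].
move: hcond; rewrite ltrBlDr -ltrBlDl ltr_pdivlMr; last by rewrite mulr_gt0.
move=> hq.
set a := `|c| in ha a0 hq.
set gap := C2 - C1 * (1 - c ^+ 2).
have hgap : 0 < gap.
  rewrite /gap ha. nra.
set u := C1 / (C1 + gap).
have hu0 : 0 < u by rewrite divr_gt0 // addr_gt0.
have hCg : 0 < C1 + gap by rewrite addr_gt0.
have h1u : (1 - u) * (C1 + gap) = gap.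
  rewrite /u; field; by rewrite gt_eqF.
have hu1 : u < 1.
  have : 0 < (1 - u) * (C1 + gap) by rewrite h1u.
  by rewrite pmulr_lgt0 // subr_gt0.
set e := 1 - c ^+ 2 * u.
have he : 0 < e by rewrite /e; nra.
have hCe : C1 * e < C2.
  have : C2 = gap + C1 * (1 - c ^+ 2) by rewrite /gap; ring.
  move=> ->; rewrite /e.
  have : C1 * (1 - u) * (C1 + gap) < gap * (C1 + gap) by rewrite -mulrA h1u; nra.
  rewrite ltr_pM2r // => h.
  have h2 : 0 <= C1 * (1 - u) * (1 - c ^+ 2).
    by apply: mulr_ge0; [apply: mulr_ge0; [apply: ltW | rewrite subr_ge0; apply: ltW] | rewrite subr_ge0].
  nra.
set b := (1 - u) / e.
have hb : b * e = 1 - u by rewrite /b divfK // gt_eqF.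
exists u, b, (b - u * c ^+ 2 * b ^+ 2); split => //; last split => //.
- have hb0 : 0 < b by rewrite /b divr_gt0 // subr_gt0.
  have : 0 < (b - u * c ^+ 2 * b ^+ 2) * e.
    have -> : (b - u * c ^+ 2 * b ^+ 2) * e = b * (e - u * c ^+ 2 * (1 - u)).
      by rewrite -hb; ring.
    apply: mulr_gt0 => //; rewrite /e.
    have h3 : 0 <= (1 - c ^+ 2) * (u * (2%:R - u)).
      apply: mulr_ge0; first by rewrite subr_ge0.
      apply: mulr_ge0; first exact: ltW.
      rewrite subr_ge0; apply: ltW; apply: (lt_trans hu1); rewrite ltr1n //.
    have h4 : 0 < (1 - u) ^+ 2 by rewrite exprn_gt0 // subr_gt0.
    nra.
  by rewrite pmulr_lgt0.
- have : (1 - u) * C1 * e < b * C2 * e.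
    by rewrite -mulrA (mulrC b) -mulrA hb; nra.
  by rewrite ltr_pM2r.
Qed.
End S.
Arguments mk {R}.
Arguments bf {R}.
Arguments Mq {R}.
Arguments Tq {R}.
Arguments bfE {R}.
Arguments sum_blocks {R}.
Arguments mk_blk {R}.
Arguments calQ_blk {R}.
Arguments quad {R}.
Arguments tr_rank1 {R}.
Arguments quad_rank1 {R}.
Arguments blk_rank1 {R}.
Arguments blkD {R}.
Arguments blkZ {R}.
Arguments tr_outer {R}.
Arguments dotvDl {R}.
Arguments dotvDr {R}.
Arguments dotvZl {R}.
Arguments dotvZr {R}.
Arguments dotvC {R}.
Arguments sqnorm_ge0 {R}.
Arguments bfZM {R}.
Arguments bfBM {R}.
Arguments bf1 {R}.
Arguments bfZl {R}.
Arguments bfZr {R}.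
Arguments bf0r {R}.
Arguments bf0l {R}.
Arguments bfT {R}.
Arguments quadT {R}.
Arguments Tq_out {R}.
Arguments Tq_in {R}.
Arguments Tq0 {R}.
Arguments psd_comb {R}.
Arguments arith {R}.


Theorem theorem3p4 (R : realType) (l k : nat)
    (w0 wcl : 'cV[R]_4) (x y : nat -> 'cV[R]_3) (Q : nat -> 'M[R]_4) (c2 : nat -> R) :
  (1 <= k)%N -> (k < l)%N ->
  on_sphere3 w0 ->
  (forall i, (1 <= i <= k)%N -> y i = quat_rot w0 *m x i) ->
  (forall i, (1 <= i <= l)%N -> is_Qmat (Q i) (y i) (x i)) ->
  (forall i, (1 <= i <= l)%N -> 0 <= c2 i) ->
  0 < \sum_(1 <= i < k.+1) c2 i ->
  on_sphere3 wcl -> wcl != w0 -> wcl != - w0 ->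
  (forall i, (k < i <= l)%N -> Q i *m wcl = 0) ->
  1 - (\sum_(k.+1 <= j < l.+1) c2 j) / (2%:R * \sum_(1 <= i < k.+1) c2 i)
    < `| dotv wcl w0 | ->
  ~ sdr_global_min Q c2 (omega_star l k w0 *m (omega_star l k w0)^T).
Proof.
move=> k1 kl sw0 Hy HQ Hc HC1 swcl _ _ Hout Hcond [_ Hmin].
move: sw0 swcl; rewrite /on_sphere3 /sqnorm => sw0 swcl.
set C1 := \sum_(1 <= i < k.+1) c2 i in HC1 Hcond.
set C2 := \sum_(k.+1 <= j < l.+1) c2 j in Hcond.
set c := dotv wcl w0 in Hcond.
have HC2 : 0 <= C2.
  rewrite /C2 big_nat_cond; apply: sumr_ge0 => i /andP[/andP[h1 h2] _].
  apply: Hc; apply/andP; split; [exact: leq_ltn_trans h1 | by []].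
have Hsym : forall i, (1 <= i <= l)%N -> (Q i)^T = Q i.
  by move=> i hi; case: (HQ i hi).
have Hin : forall i, (1 <= i <= k)%N -> bf w0 (Q i) w0 = 0.
  move=> i /andP[i1 ik].
  have hil : (1 <= i <= l)%N by rewrite i1 /=; exact: leq_trans ik (ltnW kl).
  case: (HQ i hil) => _ H; rewrite /bf H //.
  by rewrite Hy ?i1 // subrr /sqnorm /dotv trmx0 mul0mx mxE.
have Hc2 : c ^+ 2 <= 1.
  have := sqnorm_ge0 _ (wcl + (- c) *: w0).
  rewrite /sqnorm !dotvDl !dotvDr !dotvZl !dotvZr sw0 swcl (dotvC _ w0 wcl) -/c.
  by move=> h; nra.
have [u [b [D [hu0 hu1 hD0 hb [hD hfin]]]]] := arith _ _ _ HC1 HC2 Hc2 Hcond.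
pose r := b *: wcl + (- (u * c * b)) *: w0.
pose f1 (n : nat) := if (n <= k)%N then w0 else (c * b) *: wcl.
pose f2 (n : nat) := if n == 0%N then r else if (n <= k)%N then 0 else D *: wcl.
pose fs (n : nat) := if (n <= k)%N then w0 else 0.
have Es : omega_star l k w0 = mk l fs.
  apply/matrixP => p j; rewrite !mxE /fs; case: ifP => _; rewrite ?mxE //; by rewrite (ord1 j).
pose W' := u *: (mk l f1 *m (mk l f1)^T) + D^-1 *: (mk l f2 *m (mk l f2)^T).
have hDn : D != 0 by rewrite gt_eqF.
have f10 : f1 0%N = w0 by rewrite /f1 leq0n.
have f20 : f2 0%N = r by rewrite /f2 eqxx.
have Hfeas : sdr_feasible W'.
  split; first by apply: psd_comb; [exact: ltW | rewrite invr_ge0 ltW].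
  split.
    move=> i hi; rewrite !blkD !blkZ !blk_rank1 /= f10 f20.
    have i0 : (i != 0 :> nat).
      by move: hi; apply: contra => /eqP h; apply/eqP; apply: val_inj.
    case: (leqP i k) => hik.
      by rewrite /f1 /f2 hik (negbTE i0) trmx0 mulmx0 mul0mx.
    rewrite /f1 /f2 (negbTE i0) leqNgt hik /=.
    apply/matrixP => a b'; rewrite !mxE !big_ord1 /r !mxE.
    rewrite hD; field; by rewrite -hD.
  rewrite blkD !blkZ !blk_rank1 mxtraceD !mxtraceZ !tr_outer /= f10 f20.
  rewrite /sqnorm sw0 /r !dotvDl !dotvDr !dotvZl !dotvZr sw0 swcl (dotvC _ w0 wcl) -/c.
  have hex : b * (b * 1) + b * (- (u * c * b) * c) +
    (- (u * c * b) * (b * c) + - (u * c * b) * (- (u * c * b) * 1)) = (1 - u) * D.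
    apply/eqP; rewrite -subr_eq0; apply/eqP.
    transitivity (b * (b * (1 - c ^+ 2 * u) - (1 - u))).
      by rewrite hD; ring.
    by rewrite hb subrr mulr0.
  by rewrite hex; field.
have kl' : (k.+1 <= l.+1)%N by rewrite ltnS ltnW.
have Hil : forall i, (k.+1 <= i < l.+1)%N -> (1 <= i <= l)%N /\ (k < i <= l)%N.
  move=> i /andP[ki il]; rewrite ltnS in il; split; apply/andP; split => //.
  exact: leq_ltn_trans ki.
have Hik : forall i, (1 <= i < k.+1)%N -> (1 <= i <= k)%N /\ (i != 0)%N.
  move=> i /andP[i1 ik]; rewrite ltnS in ik; split; first by rewrite i1.
  by rewrite -lt0n.
have S1s : \sum_(1 <= i < k.+1) Tq Q c2 i (fs 0%N) (fs i) = - C1.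
  rewrite /C1 -sumrN; apply: eq_big_nat => i hi; have [h1 _] := Hik i hi.
  move/andP: (h1) => [_ ik].
  by rewrite /fs leq0n ik; apply: Tq_in => //; apply: Hin.
have S2s : \sum_(k.+1 <= i < l.+1) Tq Q c2 i (fs 0%N) (fs i) = 0.
  rewrite big_nat_cond big1 // => i /andP[hi _]; have [_ /andP[ki _]] := Hil i hi.
  by rewrite /fs (leqNgt i k) ki /= Tq0.
have S1a : \sum_(1 <= i < k.+1) Tq Q c2 i (f1 0%N) (f1 i) = - C1.
  rewrite /C1 -sumrN; apply: eq_big_nat => i hi; have [h1 _] := Hik i hi.
  move/andP: (h1) => [_ ik].
  by rewrite /f1 leq0n ik; apply: Tq_in => //; apply: Hin.
have S2a : \sum_(k.+1 <= i < l.+1) Tq Q c2 i (f1 0%N) (f1 i) = - (C2 * (c * b) * c).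
  rewrite /C2 mulr_suml mulr_suml -sumrN; apply: eq_big_nat => i hi.
  have [h1 h2] := Hil i hi; move/andP: (h2) => [ki _].
  rewrite /f1 leq0n (leqNgt i k) ki /= Tq_out ?Hsym ?Hout // (dotvC _ w0 wcl) -/c.
  by [].
have S1b : \sum_(1 <= i < k.+1) Tq Q c2 i (f2 0%N) (f2 i) = 0.
  rewrite big_nat_cond big1 // => i /andP[hi _]; have [/andP[_ ik] i0] := Hik i hi.
  by rewrite /f2 (negbTE i0) ik Tq0.
have S2b : \sum_(k.+1 <= i < l.+1) Tq Q c2 i (f2 0%N) (f2 i) =
    - (C2 * D * (b + - (u * c * b) * c)).
  rewrite /C2 mulr_suml mulr_suml -sumrN; apply: eq_big_nat => i hi.
  have [h1 h2] := Hil i hi; move/andP: (h2) => [ki _].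
  have i0 : (i != 0)%N by rewrite -lt0n; exact: leq_ltn_trans ki.
  rewrite /f2 eqxx (negbTE i0) (leqNgt i k) ki /= Tq_out ?Hsym ?Hout //.
  by rewrite /r dotvDl !dotvZl swcl (dotvC _ w0 wcl) -/c mulr1.
have := Hmin W' Hfeas.
rewrite /sdr_obj Es tr_rank1 quadT /W' mulmxDr mxtraceD -!scalemxAr !mxtraceZ !tr_rank1 !quadT.
have Hsplit : forall F : nat -> R, \sum_(1 <= i < l.+1) F i =
    \sum_(1 <= i < k.+1) F i + \sum_(k.+1 <= i < l.+1) F i.
  by move=> F; rewrite (big_cat_nat _ (n:=k.+1)).
rewrite !Hsplit -/C1 -/C2.
rewrite S1s S2s S1a S2a S1b S2b.
have -> : u * (- C1 - C2 * (c * b) * c) +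
   D^-1 * (0 - C2 * D * (b + - (u * c * b) * c)) + (C1 + C2) =
   (1 - u) * C1 - b * C2 + C2 by field.
move=> h; move: hfin; rewrite ltNge; move/negP; apply.
by move: h; rewrite addr0 addrA addNr add0r => h; lra.
Qed.
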